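(* Let $p$ and $q$ be two different odd primes and let $a\in(\mathbb{Z}/pq\mathbb{Z})^*$ be such that $a\bmod p$ generates $(\mathbb{Z}/p\mathbb{Z})^*$ and $a^{(p-1)/2}\equiv-1\pmod{pq}$. Let $S=S_{pq}(a)$ and $\lambda=|S\cap(S+1)|$. If $\lambda\equiv-2\pmod q$, then with $t=(\lambda+2)/q$ and any permutations $\pi_2,\dots,\pi_t$ of $\{1,\dots,p\}$, the graph $F_{(\pi_2,\dots,\pi_t)}(\Gamma_{pq}(a))$ is a Neumaier graph with parameters $(tpq,\,p+\lambda,\,\lambda;\,1,\,\lambda+2)$.
   Context: $S_{pq}(a)=\{a^j: 0\le j<p-1\}\subseteq\mathbb{Z}/pq\mathbb{Z}$, and $\Gamma_{pq}(a)$ is the Cayley graph on $(\mathbb{Z}/pq\mathbb{Z},+)$ with connection set $S_{pq}(a)$ ($x\sim y$ iff $x-y\in S_{pq}(a)$); $S+1=\{s+1:s\in S\}$. Its vertex set is partitioned into the $p$ cosets $C_1,\dots,C_p$ (in some fixed order) of the additive subgroup generated by $p$. Construction $F$: take $t$ disjoint copies $\Gamma_1,\dots,\Gamma_t$ of $\Gamma_{pq}(a)$, with $C_{i,r}$ the copy of $C_r$ in $\Gamma_i$, and set $\pi_1=\mathrm{id}$; $F_{(\pi_2,\dots,\pi_t)}(\Gamma_{pq}(a))$ has vertex set the union of the copies, and distinct $x\in C_{i,k'}$, $y\in C_{j,l'}$ are adjacent iff ($i=j$ and $x\sim y$ in $\Gamma_i$) or $\pi_i^{-1}(k')=\pi_j^{-1}(l')$.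 A regular graph is $\lambda$-edge-regular if it has at least one edge and any two adjacent vertices have exactly $\lambda$ common neighbours. A Neumaier graph with parameters $(v,k,\lambda;e,s)$ is a non-complete $k$-regular, $\lambda$-edge-regular graph on $v$ vertices containing a clique of size $s$ such that every vertex outside it has exactly $e>0$ neighbours in it. *)

(* Defs.v *)
From HB Require Import structures.
From mathcomp Require Import all_boot all_order all_algebra all_fingroup.

Import GRing.Theory.
Local Open Scope ring_scope.

Definition k_regular (T : finType) (e : rel T) (k : nat) : Prop :=
  forall x : T, #|[set y | e x y]| = k.

Definition edge_regular (T : finType) (e : rel T) (lam : nat) : Prop :=
  (exists x y : T, e x y) /\
  (forall x y : T, e x y -> #|[set z | e x z && e y z]| = lam).

Definition is_clique (T : finType) (e : rel T) (C : {set T}) : Prop :=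
  {in C &, forall x y, x != y -> e x y}.

Definition neumaier (T : finType) (e : rel T) (v k lam ee s : nat) : Prop :=
  [/\ symmetric e, irreflexive e, #|T| = v, k_regular T e k & edge_regular T e lam]
  /\ (exists x y : T, x != y /\ ~~ e x y)
  /\ (0 < ee)%N
  /\ (exists C : {set T}, [/\ #|C| = s, is_clique T e C &
        forall x, x \notin C -> #|[set y in C | e x y]| = ee]).

Definition Sset (p q : nat) (a : 'Z_(p * q)) : {set 'Z_(p * q)} :=
  [set a ^+ (nat_of_ord j) | j : 'I_(p.-1)].

Definition lam (p q : nat) (a : 'Z_(p * q)) : nat :=
  #|Sset p q a :&: [set s + 1 | s in Sset p q a]|.

Definition tpar (p q : nat) (a : 'Z_(p * q)) : nat := ((lam p q a + 2) %/ q)%N.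

(* the coset of <p> in Z/pqZ containing x, identified with x mod p *)
Definition coset_of_x (p q : nat) (x : 'Z_(p * q)) : 'Z_p := (nat_of_ord x)%:R.

Definition generates_mod (p q : nat) (a : 'Z_(p * q)) : Prop :=
  forall x : 'Z_p, x != 0 -> exists j : nat, ((nat_of_ord a)%:R : 'Z_p) ^+ j = x.

(* Construction F: vertices (i, x) = copy of x in Gamma_{i}; cosets are
   labelled by sigma (the fixed order C_1..C_p), pi i are the permutations
   (pi of the first copy is the identity). *)
Definition Fadj (p q : nat) (a : 'Z_(p * q)) (t : nat) (sigma : {perm 'Z_p})
  (pi : 'I_t -> {perm 'Z_p}) : rel ('I_t * 'Z_(p * q)) :=
  fun u v =>
    (u != v) &&
    (((u.1 == v.1) && (u.2 - v.2 \in Sset p q a)) ||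
     ((pi u.1)^-1%g (sigma (coset_of_x p q u.2)) ==
      (pi v.1)^-1%g (sigma (coset_of_x p q v.2)))).

(* Main.v *)
Require Import Defs.
From mathcomp Require Import all_boot all_order all_algebra all_fingroup.
From mathcomp Require Import zify ring.
Import GRing.Theory.
Local Open Scope ring_scope.

Section S.
Variables (p q : nat) (a : 'Z_(p * q)).
Hypotheses (Hp : prime p) (Hq : prime q) (Hpo : odd p) (Ha2 : a ^+ (p.-1)./2 = -1)
  (Hgen : generates_mod p q a).

Local Notation Z := 'Z_(p * q).
Local Notation rho := (coset_of_x p q).

Lemma p_gt1 : (1 < p)%N. Proof. exact: prime_gt1. Qed.
Lemma q_gt1 : (1 < q)%N. Proof. exact: prime_gt1. Qed.
Lemma N_gt1 : (1 < p * q)%N. Proof. have := p_gt1; have := q_gt1; lia. Qed.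

Lemma rho_nat n : rho (n%:R : Z) = n%:R.
Proof.
rewrite /coset_of_x val_Zp_nat ?N_gt1 //.
rewrite -(Zp_nat_mod p_gt1) modn_dvdm ?dvdn_mulr // Zp_nat_mod //; exact: p_gt1.
Qed.

Lemma rhoD x y : rho (x + y) = rho x + rho y.
Proof. by rewrite -[x]natr_Zp -[y]natr_Zp -natrD !rho_nat natrD. Qed.
Lemma rhoM x y : rho (x * y) = rho x * rho y.
Proof. by rewrite -[x]natr_Zp -[y]natr_Zp -natrM !rho_nat natrM. Qed.
Lemma rho1 : rho 1 = 1.
Proof. by have := rho_nat 1; rewrite !mulr1n. Qed.
Lemma rhoB x y : rho (x - y) = rho x - rho y.
Proof. by apply/eqP; rewrite eq_sym subr_eq -rhoD subrK. Qed.
Lemma rhoX x n : rho (x ^+ n) = rho x ^+ n.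
Proof. by elim: n => [|n IH]; rewrite ?expr0 ?rho1 // !exprS rhoM IH. Qed.
Lemma rho_lift (r : 'Z_p) : rho ((r : nat)%:R : Z) = r.
Proof. by rewrite rho_nat natr_Zp. Qed.

Local Notation S := (Sset p q a).

Lemma pm1_gt0 : (0 < p.-1)%N. Proof. have := p_gt1; lia. Qed.

Lemma a_pm1 : a ^+ p.-1 = 1.
Proof.
have -> : p.-1 = ((p.-1)./2 * 2)%N.
  by rewrite -(odd_halfK Hpo) doubleK muln2.
by rewrite exprM Ha2 expr2 mulrNN mulr1.
Qed.

Lemma a_mod j : a ^+ j = a ^+ (j %% p.-1).
Proof. by rewrite {1}(divn_eq j p.-1) exprD (mulnC (j %/ p.-1)%N) exprM a_pm1 expr1n mul1r. Qed.

Lemma S_pow j : a ^+ j \in S.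
Proof.
rewrite a_mod; apply/imsetP.
by exists (Ordinal (ltn_pmod j pm1_gt0)).
Qed.

Lemma memS x : x \in S -> exists j, x = a ^+ j.
Proof. by case/imsetP => j _ ->; exists j. Qed.

Lemma S_mul x y : x \in S -> y \in S -> x * y \in S.
Proof. by move=> /memS[i ->] /memS[j ->]; rewrite -exprD S_pow. Qed.

Lemma S_1 : 1 \in S. Proof. by rewrite -(expr0 a) S_pow. Qed.
Lemma S_N1 : -1 \in S. Proof. by rewrite -Ha2 S_pow. Qed.
Lemma S_N x : x \in S -> - x \in S.
Proof. by move=> xS; rewrite -mulN1r S_mul // S_N1. Qed.
Lemma S_NE x : (- x \in S) = (x \in S).
Proof. by apply/idP/idP => [/S_N|/S_N//]; rewrite opprK. Qed.

Lemma S_inv x : x \in S -> x \is a GRing.unit /\ x^-1 \in S.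
Proof.
case/imsetP => j _ ->.
have Hj := ltn_ord j.
have H1 : a ^+ j * a ^+ (p.-1 - j) = 1 by rewrite -exprD subnKC ?a_pm1 // ltnW.
have Hu : a ^+ j \is a GRing.unit.
  by apply/unitrP; exists (a ^+ (p.-1 - j)); rewrite H1 mulrC H1.
split => //.
have -> : (a ^+ j)^-1 = a ^+ (p.-1 - j).
  by rewrite -[RHS]mul1r -(mulVr Hu) -mulrA H1 mulr1.
exact: S_pow.
Qed.

Lemma cardS_le : (#|S| <= p.-1)%N.
Proof. by rewrite (leq_trans (leq_imset_card _ _)) // card_ord. Qed.

Lemma NZ_sub : [set~ (0 : 'Z_p)] \subset rho @: S.
Proof.
apply/subsetP => r; rewrite !inE => r0.
have [j <-] := Hgen r r0.
apply/imsetP; exists (a ^+ j); first exact: S_pow.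
by rewrite rhoX.
Qed.

Lemma card_NZ : #|[set~ (0 : 'Z_p)]| = p.-1.
Proof. by rewrite cardsC1 card_ord Zp_cast ?p_gt1. Qed.

Lemma rhoS_eq : rho @: S = [set~ 0] /\ #|S| = p.-1.
Proof.
have h1 := subset_leq_card NZ_sub.
have h2 : (#|rho @: S| <= #|S|)%N := leq_imset_card _ _.
have h3 := cardS_le.
rewrite card_NZ in h1.
split; last by lia.
apply/eqP; rewrite eq_sym eqEcard NZ_sub card_NZ; lia.
Qed.

Lemma cardS : #|S| = p.-1. Proof. by case: rhoS_eq. Qed.

Lemma rhoS_inj : {in S &, injective rho}.
Proof.
apply/imset_injP; case: rhoS_eq => -> ->; by rewrite card_NZ.
Qed.

Lemma rhoS_nz x : x \in S -> rho x != 0.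
Proof.
move=> xS; have : rho x \in rho @: S by apply: imset_f.
by case: rhoS_eq => -> _; rewrite !inE.
Qed.

Lemma rhoS_surj r : r != 0 -> exists2 s, s \in S & rho s = r.
Proof.
move=> r0; have : r \in rho @: S by case: rhoS_eq => -> _; rewrite !inE.
by case/imsetP => s sS ->; exists s.
Qed.

Lemma S_0 : (0 : 'Z_(p * q)) \notin S.
Proof. by apply/negP => /rhoS_nz; have := rho_nat 0; rewrite !mulr0n => ->; rewrite eqxx. Qed.

Lemma memS1 w : (w \in [set s + 1 | s in S]) = (w - 1 \in S).
Proof.
apply/imsetP/idP => [[s sS ->]|h]; first by rewrite addrK.
by exists (w - 1); rewrite ?subrK.
Qed.

Lemma cnt_lam x y : x - y \in S ->
  #|[set z : 'Z_(p * q) | (x - z \in S) && (y - z \in S)]| = lam p q a.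
Proof.
move=> dS; set d := x - y.
have [du dVS] := S_inv _ dS.
rewrite /lam.
have -> : [set z : 'Z_(p * q) | (x - z \in S) && (y - z \in S)] =
   (fun w => x - d * w) @: (S :&: [set s + 1 | s in S]).
  apply/setP => z; rewrite inE; apply/idP/imsetP.
    case/andP => h1 h2; exists (d^-1 * (x - z)).
      rewrite inE memS1 S_mul //=.
      have -> : d^-1 * (x - z) - 1 = d^-1 * (y - z).
        by rewrite -(mulVr du) -mulrBr /d; congr (_ * _); ring.
      by rewrite S_mul.
    by rewrite mulrA mulrV // mul1r; ring.
  case=> w; rewrite inE memS1 => /andP[wS w1S] ->.
  have -> : x - (x - d * w) = d * w by ring.
  have -> : y - (x - d * w) = d * (w - 1) by rewrite /d; ring.
  by rewrite !S_mul.
rewrite card_in_imset // => w1 w2 _ _.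
by move=> h; apply: (mulrI du); apply: oppr_inj; apply: (addrI x).
Qed.

Lemma fib_eq r : #|[set x : 'Z_(p * q) | rho x == r]| = #|[set x : 'Z_(p * q) | rho x == 0]|.
Proof.
set L : 'Z_(p * q) := (r : nat)%:R.
have -> : [set x : 'Z_(p * q) | rho x == r] = [set x + L | x in [set x : 'Z_(p * q) | rho x == 0]].
  apply/setP => y; rewrite inE; apply/eqP/imsetP => [h|[x]].
    exists (y - L); last by rewrite subrK.
    by rewrite inE rhoB h rho_lift subrr.
  by rewrite inE => /eqP h ->; rewrite rhoD h rho_lift add0r.
by rewrite card_imset //; apply: addIr.
Qed.

Lemma card_Z : #|'Z_(p * q)| = (p * q)%N.
Proof. by rewrite card_ord Zp_cast // N_gt1. Qed.

Lemma fib_card r : #|[set x : 'Z_(p * q) | rho x == r]| = q.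
Proof.
rewrite fib_eq.
have : (#|'Z_(p * q)| = \sum_(r : 'Z_p) #|[set x : 'Z_(p * q) | rho x == r]|)%N.
  rewrite -sum1_card (partition_big rho xpredT) //=.
  apply: eq_bigr => r' _; rewrite -sum1_card; apply: eq_bigl => x; by rewrite inE.
under eq_bigr do rewrite fib_eq.
have cp : #|'Z_p| = p by rewrite card_ord Zp_cast ?p_gt1.
rewrite card_Z sum_nat_const cp => /eqP.
by rewrite eqn_pmul2l ?prime_gt0 // => /eqP.
Qed.

Variables (t : nat) (sigma : {perm 'Z_p}) (pi : 'I_t -> {perm 'Z_p}).
Local Notation T := ('I_t * 'Z_(p * q))%type.
Local Notation e := (Fadj p q a t sigma pi).

Definition cls (u : T) : 'Z_p := (pi u.1)^-1%g (sigma (rho u.2)).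
Definition inA (u v : T) : bool := (u.1 == v.1) && (u.2 - v.2 \in S).

Lemma eE u v : e u v = (u != v) && (inA u v || (cls u == cls v)).
Proof. by []. Qed.

Lemma inA_sym u v : inA u v = inA v u.
Proof. by rewrite /inA eq_sym -S_NE opprB. Qed.

Lemma cls_same u v : u.1 = v.1 -> (cls u == cls v) = (rho u.2 == rho v.2).
Proof.
move=> h; rewrite /cls h; apply/eqP/eqP => [/perm_inj/perm_inj //|-> //].
Qed.

Lemma inA_cls u v : inA u v -> cls u != cls v.
Proof.
case/andP => /eqP h1 h2; rewrite cls_same // -subr_eq0 -rhoB.
exact: rhoS_nz.
Qed.

Lemma inA_uniq w z y : inA w z -> inA w y -> cls z = cls y -> z = y.
Proof.
case/andP => /eqP h1 h2 /andP[/eqP h3 h4] /eqP.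
rewrite cls_same -?h1 -?h3 // => /eqP hr.
have : w.2 - z.2 = w.2 - y.2 by apply: rhoS_inj; rewrite // !rhoB hr.
move=> h5; have {h5} h5 : z.2 = y.2 by apply: oppr_inj; apply: (addrI w.2).
by case: z y h1 h3 h5 {h2 h4 hr} => [? ?] [? ?] /= <- <- ->.
Qed.

Definition K (c : 'Z_p) : {set T} := [set v | cls v == c].

Lemma clsE (i : 'I_t) x c : (cls (i, x) == c) = (rho x == sigma^-1%g (pi i c)).
Proof.
rewrite /cls /=; apply/eqP/eqP => [<-|->]; by rewrite ?permKV ?permK.
Qed.

Lemma card_K c : #|K c| = (t * q)%N.
Proof.
rewrite -sum1_card.
rewrite (eq_bigl (fun v : T => predT v.1 && (cls (v.1, v.2) == c))); last first.
  by move=> [i x]; rewrite inE.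
rewrite -(pair_big_dep predT (fun i x => cls (i, x) == c) (fun _ _ => 1%N)) /=.
rewrite (eq_bigr (fun _ => q)) ?sum_nat_const ?card_ord //.
move=> i _; rewrite sum1_card -[RHS](fib_card (sigma^-1%g (pi i c))).
apply: eq_card => x; rewrite inE -clsE. by [].
Qed.

Definition A (u : T) : {set T} := [set v | inA u v].

Lemma card_A u : #|A u| = p.-1.
Proof.
rewrite -cardS.
have -> : A u = (fun s => (u.1, u.2 - s)) @: S.
  apply/setP => v; rewrite inE; apply/idP/imsetP.
    case/andP => /eqP h1 h2; exists (u.2 - v.2) => //.
    by rewrite opprB addrC subrK h1; case: v {h1 h2}.
  by case=> s sS ->; rewrite /inA /= eqxx opprB addrC subrK.
rewrite card_imset // => s1 s2 /(congr1 snd) /= h; apply: oppr_inj; apply: (addrI u.2); exact: h.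
Qed.

Lemma NE u : [set v | e u v] = A u :|: (K (cls u) :\ u).
Proof.
apply/setP => v; rewrite !inE eE.
case: (boolP (inA u v)) => h /=.
  rewrite andbT; apply/eqP => uv; move: h; rewrite -uv /inA /= subrr.
  by rewrite (negbTE S_0) andbF.
by rewrite eq_sym (eq_sym (cls v)).
Qed.

Lemma AK_disj u : A u :&: (K (cls u) :\ u) = set0.
Proof.
apply/setP => v; rewrite !inE; apply/negP => /and3P[h _ /eqP hc].
by move: (inA_cls _ _ h); rewrite hc eqxx.
Qed.

Lemma deg u : #|[set v | e u v]| = (p.-1 + (t * q).-1)%N.
Proof.
rewrite NE cardsU AK_disj cards0 subn0 card_A.
have hu : u \in K (cls u) by rewrite inE.
have := card_K (cls u); rewrite (cardsD1 u (K (cls u))) hu /= => <-; by rewrite add1n.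
Qed.

Lemma inA_neq u v : inA u v -> u != v.
Proof. by move/inA_cls; apply: contraNneq => ->. Qed.

Lemma common_same u v : e u v -> cls u = cls v ->
  #|[set z | e u z && e v z]| = (t * q).-2.
Proof.
move=> /andP[uv _] huv.
have -> : [set z | e u z && e v z] = K (cls u) :\ u :\ v.
  apply/setP => z; rewrite !inE !eE.
  case: (boolP (cls u == cls z)) => hz.
    by rewrite -huv hz !orbT !andbT (eq_sym (cls z)) hz andbT (eq_sym z v) (eq_sym z u) andbC.
  rewrite (eq_sym (cls z)) (negbTE hz) !andbF -huv (negbTE hz) !orbF.
  apply/negP => /and3P[/andP[_ h1] _ h2].
  rewrite inA_sym in h1; rewrite inA_sym in h2.
  by move/negP: uv; apply; apply/eqP; exact: (inA_uniq _ _ _ h1 h2 huv).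
have hu : u \in K (cls u) by rewrite inE.
have hv : v \in K (cls u) :\ u by rewrite !inE eq_sym uv huv eqxx.
have := card_K (cls u); rewrite (cardsD1 u (K (cls u))) hu (cardsD1 v (K (cls u) :\ u)) hv.
by move=> <-.
Qed.

Lemma common_diff u v : e u v -> cls u != cls v ->
  #|[set z | e u z && e v z]| = lam p q a.
Proof.
move=> euv huv.
have iuv : inA u v by move: euv; rewrite eE (negbTE huv) orbF => /andP[].
have -> : [set z | e u z && e v z] = (fun y => (u.1, y)) @:
            [set y : 'Z_(p * q) | (u.2 - y \in S) && (v.2 - y \in S)].
  apply/setP => z; rewrite !inE !eE.
  apply/idP/imsetP.
    move=> /andP[/andP[uz h1] /andP[vz h2]].
    have ivu : inA v u by rewrite inA_sym.
    have h1' : inA u z.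
      case/orP: h1 => // /eqP hc.
      move: h2; rewrite -hc eq_sym (negbTE huv) orbF => h2.
      have zu := inA_uniq _ _ _ h2 ivu (esym hc).
      by move: uz; rewrite zu eqxx.
    have h2' : inA v z.
      case/orP: h2 => // /eqP hc.
      have zv := inA_uniq _ _ _ h1' iuv (esym hc).
      by move: vz; rewrite zv eqxx.
    exists z.2; last by case/andP: (h1') => /eqP ->; case: z {uz h1 vz h2 h1' h2'}.
    case/andP: h1' => /eqP h1a h1b; case/andP: h2' => /eqP h2a h2b.
    by rewrite inE h1b h2b.
  case=> y; rewrite inE => /andP[h1 h2] ->.
  have h1' : inA u (u.1, y) by rewrite /inA eqxx /= h1.
  have h2' : inA v (u.1, y).
    by rewrite /inA /= h2 andbT; case/andP: iuv => /eqP ->.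
  by rewrite h1' h2' (inA_neq _ _ h1') (inA_neq _ _ h2').
rewrite card_imset; last by move=> y1 y2 [].
by apply: cnt_lam; case/andP: iuv.
Qed.

Lemma out1 c x : x \notin K c -> #|[set y in K c | e x y]| = 1%N.
Proof.
rewrite inE => hx.
set r0 := sigma^-1%g (pi x.1 c).
have hr : rho x.2 - r0 != 0.
  rewrite subr_eq0; apply: contra hx => h.
  by move: h; rewrite /r0; case: x {r0} => i y /= h; rewrite clsE.
have [s sS hs] := rhoS_surj _ hr.
set y0 : T := (x.1, x.2 - s).
have iy : inA x y0.
  by rewrite /inA /= eqxx /=; have -> : x.2 - (x.2 - s) = s by ring.
have cy : cls y0 == c.
  by rewrite /y0 clsE rhoB hs opprB addrC subrK.
rewrite (_ : [set y in K c | e x y] = [set y0]) ?cards1 //.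
apply/setP => y; rewrite !inE; apply/andP/eqP.
  case=> hy exy.
  have ixy : inA x y.
    move: exy; rewrite eE => /andP[_ /orP[//|/eqP hxy]].
    by move: hx; rewrite hxy hy.
  apply: (inA_uniq _ _ _ ixy iy).
  by rewrite (eqP hy) (eqP cy).
move=> ->; split => //.
by rewrite eE iy (inA_neq _ _ iy).
Qed.

Lemma main_sec : (t * q = lam p q a + 2)%N ->
  neumaier _ e (t * p * q)%N (p + lam p q a)%N (lam p q a) 1%N (lam p q a + 2)%N.
Proof.
move=> Htq.
have p2 := p_gt1.
have t0 : (0 < t)%N by case: (posnP t) Htq => [->|//]; rewrite mul0n addn2.
pose i0 : 'I_t := Ordinal t0.
pose u0 : T := (i0, 0).
have degE u : #|[set v | e u v]| = (p + lam p q a)%N.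
  by rewrite deg Htq; lia.
have cardT : #|{: T}| = (t * p * q)%N.
  by rewrite card_prod card_ord card_Z mulnA.
split; [split|split; [|split]].
- move=> x y; rewrite !eE eq_sym inA_sym; congr (_ && (_ || _)).
  exact: eq_sym.
- by move=> x; rewrite eE eqxx.
- exact: cardT.
- exact: degE.
- split.
    have : (0 < #|[set v | e u0 v]|)%N by rewrite degE; lia.
    by case/card_gt0P => y; rewrite inE => h; exists u0, y.
  move=> x y exy; case: (boolP (cls x == cls y)) => h.
    by rewrite common_same ?Htq ?(eqP h) //; lia.
  exact: common_diff.
- have : (0 < #|~: (u0 |: [set v | e u0 v])|)%N.
    have h1 := cardsC (u0 |: [set v | e u0 v]).
    have h2 : (#|u0 |: [set v | e u0 v]| <= 1 + (p + lam p q a))%N.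
      by rewrite cardsU1 degE; case: (u0 \notin _).
    rewrite cardT in h1.
    have h3 : (t * p * q = p * (lam p q a + 2))%N by rewrite mulnAC Htq mulnC.
    nia.
  case/card_gt0P => y; rewrite !inE negb_or => /andP[h1 h2].
  by exists u0, y; rewrite eq_sym.
- by [].
exists (K 0); split.
- by rewrite card_K.
- move=> x y; rewrite !inE => /eqP hx /eqP hy xy.
  by rewrite eE xy hx hy eqxx orbT.
- exact: out1.
Qed.
End S.

Theorem mainTheorem6 (p q : nat) (a : 'Z_(p * q)) (sigma : {perm 'Z_p})
  (pi : 'I_(tpar p q a) -> {perm 'Z_p}) :
  prime p -> prime q -> odd p -> odd q -> p != q ->
  a \is a GRing.unit ->
  generates_mod p q a ->
  a ^+ (p.-1)./2 = -1 ->
  (lam p q a + 2 = 0 %[mod q])%N ->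
  (forall i : 'I_(tpar p q a), nat_of_ord i = 0%N -> pi i = 1%g) ->
  neumaier _ (Fadj p q a (tpar p q a) sigma pi) (tpar p q a * p * q)%N (p + lam p q a)%N
    (lam p q a) 1%N (lam p q a + 2)%N.
Proof.
move=> Hp Hq Hpo _ _ _ Hgen Ha2 Hmod _.
apply: main_sec => //.
rewrite /tpar divnK //.
by rewrite /dvdn; apply/eqP; rewrite Hmod mod0n.
Qed.
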